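(* Under the hypotheses and notation of the context, for every $\epsilon>0$ there exists $\mu_\epsilon>1$ such that for all $1\le\mu\le\mu_\epsilon$ and all $(x,t)\in\mathbb T^N\times[0,\infty)$, $$P_{\eta\mu}[u](x,t)\ge P_{\eta1}[u](x,t)-\epsilon.$$ Consequently, if $m_{\eta1}:=\lim_{t\to\infty}\max\{0,\sup_xP_{\eta1}[u](x,t)\}>0$, then there is $\mu_\eta>1$ such that $\sup_{x}P_{\eta\mu}[u](x,t)\ge m_{\eta1}/2$ for all $t\ge0$ and $1<\mu<\mu_\eta$.
   Context: $\mathbb T^N=\mathbb R^N/\mathbb Z^N$. $u\in C(\mathbb T^N\times[0,\infty))$ is a bounded function (the bounded viscosity solution of the equation $u_t+\sup_\theta\{-\mathrm{tr}(A_\theta D^2u)+H_\theta(x,Du)\}=0$ with ergodic constant normalized to $0$, under the standing assumptions of bounded Lipschitz diffusions, locally Lipschitz Hamiltonians, convexity in $p$, and uniform Lipschitz bounds in $x$), and $v$ is a bounded continuous function on $\mathbb T^N$. For $\eta>0$, $\mu\ge1$: $P_{\eta\mu}[u](x,t)=\sup_{s\ge t}\{u(x,t)-v(x)-\mu(u(x,s)-v(x))-\mu\eta(s-t)\}$. It is known (Lemma 4.2) that $t\mapsto\max\{0,\sup_xP_{\eta1}[u](x,t)\}$ is nonincreasing, so $m_{\eta1}$ is well defined. *)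

(* Defs.v *)
From Stdlib Require Import Reals Lra ClassicalEpsilon.
From Stdlib Require Fin.
Open Scope R_scope.

(* Points of R^N; the torus T^N = R^N/Z^N is modelled by Z^N-periodic functions. *)
Definition Vec (N : nat) := Fin.t N -> R.

(* Supremum of a set of reals (well defined whenever the set is nonempty and
   bounded above, which is the case for all sets used below). *)
Definition Rsup (E : R -> Prop) : R :=
  epsilon (inhabits 0) (fun l => is_lub E l).

Definition Pemu {N : nat} (eta mu : R) (u : Vec N -> R -> R) (v : Vec N -> R)
  (x : Vec N) (t : R) : R :=
  Rsup (fun r => exists s, t <= s /\
          r = u x t - v x - mu * (u x s - v x) - mu * eta * (s - t)).

Definition supP {N : nat} (eta mu : R) (u : Vec N -> R -> R) (v : Vec N -> R)
  (t : R) : R :=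
  Rsup (fun r => exists x : Vec N, r = Pemu eta mu u v x t).

Definition lim_at_infty (f : R -> R) (l : R) : Prop :=
  forall eps, eps > 0 -> exists T, forall t, t >= T -> Rabs (f t - l) < eps.

Definition periodic_x {N : nat} (u : Vec N -> R -> R) : Prop :=
  forall (x : Vec N) (k : Fin.t N -> Z) (t : R),
    u (fun j => x j + IZR (k j)) t = u x t.

Definition periodic {N : nat} (v : Vec N -> R) : Prop :=
  forall (x : Vec N) (k : Fin.t N -> Z), v (fun j => x j + IZR (k j)) = v x.

Definition cont_xt {N : nat} (u : Vec N -> R -> R) : Prop :=
  forall (x : Vec N) t, 0 <= t -> forall eps, eps > 0 -> exists delta, delta > 0 /\
    forall (y : Vec N) s, 0 <= s -> (forall j, Rabs (y j - x j) < delta) ->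
      Rabs (s - t) < delta -> Rabs (u y s - u x t) < eps.

Definition cont_x {N : nat} (v : Vec N -> R) : Prop :=
  forall (x : Vec N) eps, eps > 0 -> exists delta, delta > 0 /\
    forall (y : Vec N), (forall j, Rabs (y j - x j) < delta) ->
      Rabs (v y - v x) < eps.

(* Main.v *)
Require Import Defs.
From Stdlib Require Import Reals Lra Psatz ClassicalEpsilon Classical.
Open Scope R_scope.

Lemma Rsup_lub (E : R -> Prop) : (exists r, E r) -> (exists M, forall r, E r -> r <= M) ->
  is_lub E (Rsup E).
Proof.
  intros [r Hr] [M HM]. unfold Rsup.
  apply epsilon_spec.
  destruct (completeness E) as [l Hl].
  - exists M. intros y Hy. now apply HM.
  - now exists r.
  - now exists l.
Qed.

Lemma Rsup_ge (E : R -> Prop) r : E r -> (exists M, forall r, E r -> r <= M) -> r <= Rsup E.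
Proof. intros Hr HM. destruct (Rsup_lub E (ex_intro _ r Hr) HM) as [H _]. now apply H. Qed.

Lemma Rsup_approx (E : R -> Prop) eps : (exists r, E r) -> (exists M, forall r, E r -> r <= M) ->
  eps > 0 -> exists r, E r /\ r > Rsup E - eps.
Proof.
  intros He HM Heps. destruct (Rsup_lub E He HM) as [_ H].
  apply NNPP. intro Hn.
  assert (Rsup E <= Rsup E - eps); [|lra].
  apply H. intros y Hy. apply Rnot_lt_le. intro Hc. apply Hn. exists y. split; auto; lra.
Qed.

Lemma Rabs_le_inv (a b : R) : Rabs a <= b -> - b <= a <= b.
Proof. unfold Rabs; destruct (Rcase_abs a); intros; lra. Qed.

Theorem lemma4p3 (N : nat) (u : Vec N -> R -> R) (v : Vec N -> R) (eta : R)
  (Hu_per : periodic_x u) (Hu_cont : cont_xt u)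
  (Hu_bd : exists C, forall x t, 0 <= t -> Rabs (u x t) <= C)
  (Hv_per : periodic v) (Hv_cont : cont_x v)
  (Hv_bd : exists C, forall x, Rabs (v x) <= C)
  (Heta : eta > 0)
  (* Lemma 4.2: t |-> max{0, sup_x P_{eta 1}[u](x,t)} is nonincreasing *)
  (Hmono : forall t1 t2, 0 <= t1 -> t1 <= t2 ->
     Rmax 0 (supP eta 1 u v t2) <= Rmax 0 (supP eta 1 u v t1)) :
  (forall eps, eps > 0 -> exists mu_eps, mu_eps > 1 /\
     forall mu, 1 <= mu <= mu_eps -> forall (x : Vec N) t, 0 <= t ->
       Pemu eta mu u v x t >= Pemu eta 1 u v x t - eps)
  /\
  (forall m, lim_at_infty (fun t => Rmax 0 (supP eta 1 u v t)) m -> m > 0 ->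
     exists mu_eta, mu_eta > 1 /\
       forall t mu, 0 <= t -> 1 < mu < mu_eta -> supP eta mu u v t >= m / 2).
Proof.
  destruct Hu_bd as [Cu HCu]. destruct Hv_bd as [Cv HCv].
  set (K := Cu + Cv).
  assert (HK : forall x t, 0 <= t -> Rabs (u x t - v x) <= K).
  { intros x t Ht. unfold K. pose proof (HCu x t Ht). pose proof (HCv x).
    pose proof (Rabs_triang (u x t) (- v x)). rewrite Rabs_Ropp in H1.
    unfold Rminus. lra. }
  assert (HK0 : 0 <= K).
  { pose proof (HCu (fun _ => 0) 0 (Rle_refl 0)). pose proof (HCv (fun _ => 0)).
    pose proof (Rabs_pos (u (fun _ => 0) 0)). pose proof (Rabs_pos (v (fun _ => 0))).
    unfold K; lra. }
  assert (Hne : forall mu x t, exists r, exists s, t <= s /\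
     r = u x t - v x - mu * (u x s - v x) - mu * eta * (s - t)).
  { intros mu x t. eexists. exists t. split; [lra|reflexivity]. }
  assert (Hbd : forall mu x t, 0 <= t -> 0 <= mu -> exists M, forall r,
     (exists s, t <= s /\ r = u x t - v x - mu * (u x s - v x) - mu * eta * (s - t)) -> r <= M).
  { intros mu x t Ht Hmu. exists (K + mu * K). intros r [s [Hs ->]].
    pose proof (HK x t Ht). pose proof (HK x s ltac:(lra)).
    apply Rabs_le_inv in H. apply Rabs_le_inv in H0.
    assert (mu * eta * (s - t) >= 0).
    { apply Rle_ge. apply Rmult_le_pos; [apply Rmult_le_pos|]; lra. }
    assert (- (mu * (u x s - v x)) <= mu * K).
    { replace (- (mu * (u x s - v x))) with (mu * (- (u x s - v x))) by ring.
      apply Rmult_le_compat_l; lra. }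
    lra. }
  assert (HPbd : forall mu x t, 0 <= t -> 0 <= mu -> Pemu eta mu u v x t <= K + mu * K).
  { intros mu x t Ht Hmu. unfold Pemu.
    destruct (Rsup_lub _ (Hne mu x t) (Hbd mu x t Ht Hmu)) as [_ H]. apply H.
    intros r [s [Hs ->]].
    pose proof (HK x t Ht). pose proof (HK x s ltac:(lra)).
    apply Rabs_le_inv in H0. apply Rabs_le_inv in H1.
    assert (mu * eta * (s - t) >= 0).
    { apply Rle_ge. apply Rmult_le_pos; [apply Rmult_le_pos|]; lra. }
    assert (- (mu * (u x s - v x)) <= mu * K).
    { replace (- (mu * (u x s - v x))) with (mu * (- (u x s - v x))) by ring.
      apply Rmult_le_compat_l; lra. }
    lra. }
  assert (Part1 : forall eps, eps > 0 -> exists mu_eps, mu_eps > 1 /\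
     forall mu, 1 <= mu <= mu_eps -> forall (x : Vec N) t, 0 <= t ->
       Pemu eta mu u v x t >= Pemu eta 1 u v x t - eps).
  { intros eps Heps.
    set (D := 3 * K + eps / 2 + 1).
    assert (HD : D > 0) by (unfold D; lra).
    exists (1 + eps / (2 * D)). split.
    { assert (eps / (2 * D) > 0) by (apply Rdiv_lt_0_compat; lra). lra. }
    intros mu Hmu x t Ht.
    destruct (Rsup_approx _ (eps/2) (Hne 1 x t) (Hbd 1 x t Ht ltac:(lra)) ltac:(lra))
      as [r [[s [Hs ->]] Hr]].
    fold (Pemu eta 1 u v x t) in Hr.
    assert (HP10 : 0 <= Pemu eta 1 u v x t).
    { unfold Pemu. apply Rsup_ge; [|apply Hbd; lra]. exists t. split; [lra|ring]. }
    pose proof (HK x t Ht). pose proof (HK x s ltac:(lra)).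
    apply Rabs_le_inv in H. apply Rabs_le_inv in H0.
    assert (Hst : eta * (s - t) <= 2 * K + eps / 2) by lra.
    assert (Hb : (u x s - v x) + eta * (s - t) <= D) by (unfold D; lra).
    assert (Hm1 : (mu - 1) * D <= eps / 2).
    { assert (mu - 1 <= eps / (2 * D)) by lra.
      apply Rmult_le_compat_r with (r := D) in H1; [|lra].
      replace (eps / (2 * D) * D) with (eps / 2) in H1 by (field; lra). lra. }
    assert (Hm2 : (mu - 1) * ((u x s - v x) + eta * (s - t)) <= (mu - 1) * D).
    { apply Rmult_le_compat_l; lra. }
    assert (Pemu eta mu u v x t >= u x t - v x - mu * (u x s - v x) - mu * eta * (s - t)).
    { apply Rle_ge. unfold Pemu. apply Rsup_ge; [|apply Hbd; lra]. exists s. split; [lra|ring]. }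
    lra. }
  split; [exact Part1|].
  intros m Hlim Hm.
  destruct (Part1 (m/4) ltac:(lra)) as [mu0 [Hmu0 Hmu0']].
  exists mu0. split; [exact Hmu0|]. intros t mu Ht Hmu.
  assert (Hge : supP eta 1 u v t >= m).
  { apply Rnot_lt_ge. intro Hc.
    assert (Hmax : Rmax 0 (supP eta 1 u v t) < m).
    { unfold Rmax. destruct (Rle_dec 0 (supP eta 1 u v t)); lra. }
    destruct (Hlim (m - Rmax 0 (supP eta 1 u v t)) ltac:(lra)) as [T HT].
    set (t' := Rmax T t).
    pose proof (HT t' (Rle_ge _ _ (Rmax_l T t))).
    pose proof (Hmono t t' Ht (Rmax_r T t)).
    apply Rabs_def2 in H. lra. }
  assert (HbdS : forall mu, 0 <= mu -> exists M, forall r, (exists x : Vec N, r = Pemu eta mu u v x t) -> r <= M).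
  { intros mu' Hmu'. exists (K + mu' * K). intros r [x ->]. apply HPbd; lra. }
  destruct (Rsup_approx _ (m/4) (ex_intro _ _ (ex_intro _ (fun _ => 0) eq_refl)) (HbdS 1 ltac:(lra)) ltac:(lra))
    as [r [[x ->] Hr]].
  fold (supP eta 1 u v t) in Hr.
  pose proof (Hmu0' mu ltac:(lra) x t Ht).
  assert (Pemu eta mu u v x t <= supP eta mu u v t).
  { unfold supP. apply Rsup_ge; [exists x; reflexivity|apply HbdS; lra]. }
  lra.
Qed.
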